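(* Let $(\varphi,\mathcal A,V)$ be a linear system with $\mathcal A$ and $V$ finite dimensional. (i) If $(\pi,S,T,W)$ is a principle dilation system of $(\varphi,\mathcal A,V)$ with $\dim W=(\dim\mathcal A)(\dim V)$, then every linearly minimal homomorphism dilation system of $(\varphi,\mathcal A,V)$ is irreducible, hence principle. (ii) If $(\pi,S,T,W)$ is a principle dilation system of $(\varphi,\mathcal A,V)$ and $(\pi_1,S_1,T_1,W_1)$ is a linearly minimal homomorphism dilation system with $\dim W_1\le\dim W$, then $(\pi_1,S_1,T_1,W_1)$ is irreducible.
   Context: Fix a field $\mathbb F$; all algebras and vector spaces are over $\mathbb F$, and $L(X)$ is the algebra of linear maps $X\to X$. A linear system $(\varphi,\mathcal A,V)$: $\mathcal A$ a unital associative algebra with unit $I$, $V$ a vector space, $\varphi:\mathcal A\to L(V)$ linear with $\varphi(I)=\mathrm{id}_V$. A homomorphism dilation system $(\pi,S,T,W)$: $W$ a vector space, $\pi:\mathcal A\to L(W)$ a unital homomorphism, $T:V\to W$ injective linear, $S:W\to V$ surjective linear, $\varphi(a)=S\pi(a)T$ for all $a$. It is linearly minimal if $W=\mathrm{span}\{\pi(a)Tv\}$, irreducible if $\ker S$ contains no nonzero subspace invariant under all $\pi(a)$, and principle if linearly minimal and irreducible. *)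

(* Defs.v *)
From HB Require Import structures.
From mathcomp Require Import all_boot all_order all_algebra all_field.
Set Implicit Arguments. Unset Strict Implicit. Unset Printing Implicit Defensive.
Import GRing.Theory.
Local Open Scope ring_scope.

Section Dil.
Variable F : fieldType.
Variable A : falgType F.
Variable V : vectType F.

Definition linear_system (phi : A -> 'End(V)) : Prop :=
  (forall (c : F) (x y : A), phi (c *: x + y) = c *: phi x + phi y) /\
  phi 1 = \1%VF.

Variable W : vectType F.

Definition hom_dilation (phi : A -> 'End(V)) (pi : A -> 'End(W))
  (S : 'Hom(W, V)) (T : 'Hom(V, W)) : Prop :=
  (forall (c : F) (x y : A), pi (c *: x + y) = c *: pi x + pi y) /\
  pi 1 = \1%VF /\
  (forall x y : A, pi (x * y) = (pi x \o pi y)%VF) /\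
  injective T /\
  (forall v : V, exists w : W, S w = v) /\
  (forall (a : A) (v : V), phi a v = S (pi a (T v))).

(* W = span {pi(a) T v} : every subspace containing all pi(a) T v is W *)
Definition lin_minimal (pi : A -> 'End(W)) (T : 'Hom(V, W)) : Prop :=
  forall U : {vspace W}, (forall (a : A) (v : V), pi a (T v) \in U) -> U = fullv.

Definition irreducible_dil (pi : A -> 'End(W)) (S : 'Hom(W, V)) : Prop :=
  forall U : {vspace W}, (U <= lker S)%VS ->
    (forall a : A, (pi a @: U <= U)%VS) -> U = 0%VS.

Definition principle_dil (pi : A -> 'End(W)) (S : 'Hom(W, V)) (T : 'Hom(V, W)) : Prop :=
  lin_minimal pi T /\ irreducible_dil pi S.

End Dil.

(* Main.v *)
Require Import Defs.
From HB Require Import structures.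
From mathcomp Require Import all_boot all_order all_algebra all_field.
From mathcomp Require Import zify.
Local Open Scope ring_scope.
Import GRing.Theory.

Section Core.
Variables (F : fieldType) (A : falgType F) (V : vectType F) (phi : A -> 'End(V)).

Definition X := {ffun 'I_(\dim (fullv : {vspace A})) -> V}.
Definition eb (i : 'I_(\dim (fullv : {vspace A}))) : A := (vbasis (fullv : {vspace A}))`_i.

Lemma dimX : dim X = (\dim (fullv : {vspace A}) * \dim (fullv : {vspace V}))%N.
Proof. by rewrite !dimvf /dim /= card_ord. Qed.

Section OneW.
Variables (W : vectType F) (pi : A -> 'End(W)) (S : 'Hom(W, V)) (T : 'Hom(V, W)).
Hypothesis Hd : hom_dilation phi pi S T.

Definition Phif (x : X) : W := \sum_i pi (eb i) (T (x i)).
Lemma Phif_lin : linear Phif.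
Proof.
move=> c x y; rewrite /Phif scaler_sumr -big_split; apply: eq_bigr => i _ /=.
by rewrite !ffunE !linearP.
Qed.
Definition Phi : 'Hom(X, W) :=
  linfun (HB.pack Phif (GRing.isLinear.Build _ _ _ _ Phif Phif_lin) : {linear X -> W}).
Lemma PhiE x : Phi x = \sum_i pi (eb i) (T (x i)).
Proof. by rewrite /Phi lfunE. Qed.

Lemma key b x : S (pi b (Phi x)) = \sum_i phi (b * eb i) (x i).
Proof.
case: Hd => _ [_ [Hm [_ [_ Hphi]]]].
rewrite PhiE !linear_sum; apply: eq_bigr => i _.
by rewrite Hphi Hm comp_lfunE.
Qed.

Lemma Phi_onto : lin_minimal pi T -> limg Phi = fullv.
Proof.
move=> Hmin; apply: Hmin => a v.
case: Hd => Hl _.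
have ->: a = \sum_i coord (vbasis (fullv : {vspace A})) i a *: eb i.
  exact: (coord_vbasis (memvf a)).
pose x : X := [ffun i => coord (vbasis (fullv : {vspace A})) i a *: v].
have Hsum : forall (r : seq 'I_(\dim (fullv : {vspace A}))),
   pi (\sum_(i <- r) coord (vbasis (fullv : {vspace A})) i a *: eb i) (T v)
   = \sum_(i <- r) pi (eb i) (T (x i)).
  elim=> [|j r IH].
    rewrite !big_nil.
    have p0 : pi 0 = 0.
      have h := Hl 1 0 0; rewrite !scale1r addr0 in h.
      have: pi 0 + pi 0 - pi 0 = pi 0 - pi 0 by rewrite -h.
      by rewrite addrK subrr.
    by rewrite p0 zero_lfunE.
  rewrite !big_cons -IH.
  have -> : coord (vbasis (fullv : {vspace A})) j a *: eb j +
     \sum_(i <- r) coord (vbasis fullv) i a *: eb i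
     = coord (vbasis (fullv : {vspace A})) j a *: eb j +
     \sum_(i <- r) coord (vbasis fullv) i a *: eb i by [].
  rewrite Hl add_lfunE scale_lfunE ffunE !linearZ /=.
  by [].
rewrite Hsum -PhiE; exact: memv_img (memvf x).
Qed.

Lemma zero_of_irr w : irreducible_dil pi S -> (forall b, S (pi b w) = 0) -> w = 0.
Proof.
move=> Hirr H0.
case: Hd => Hl [H1 [Hm _]].
pose g (b : A) : W := pi b w.
have g_lin : linear g.
  by move=> c x y; rewrite /g Hl add_lfunE scale_lfunE.
pose G : 'Hom(A, W) := linfun (HB.pack g (GRing.isLinear.Build _ _ _ _ g g_lin) : {linear A -> W}).
have GE b : G b = pi b w by rewrite /G lfunE.
have U0 : limg G = 0%VS.
  apply: Hirr.
    apply/subvP => u /memv_imgP [b _ ->]; by rewrite memv_ker GE H0.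
  move=> a; apply/subvP => u /memv_imgP [u' /memv_imgP [b _ ->] ->].
  by rewrite GE -comp_lfunE -Hm -GE memv_img ?memvf.
have : G 1 \in limg G by rewrite memv_img ?memvf.
by rewrite U0 memv0 GE H1 id_lfunE => /eqP.
Qed.

End OneW.
Arguments Phi_onto {W pi S T}.
Arguments key {W pi S T}.
Arguments zero_of_irr {W pi S T}.
Arguments Phi {W} pi T.

Lemma core (W : vectType F) (pi : A -> 'End(W)) (S : 'Hom(W, V)) (T : 'Hom(V, W))
      (W1 : vectType F) (pi1 : A -> 'End(W1)) (S1 : 'Hom(W1, V)) (T1 : 'Hom(V, W1)) :
     hom_dilation phi pi S T -> principle_dil pi S T ->
     hom_dilation phi pi1 S1 T1 -> lin_minimal pi1 T1 ->
     (\dim (fullv : {vspace W1}) <= \dim (fullv : {vspace W}))%N ->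
     irreducible_dil pi1 S1.
Proof.
move=> Hd [Hmin Hirr] Hd1 Hmin1 Hdim.
have on := Phi_onto Hd Hmin; have on1 := Phi_onto Hd1 Hmin1.
have sub : (lker (Phi pi1 T1) <= lker (Phi pi T))%VS.
  apply/subvP => x; rewrite !memv_ker => /eqP Hx; apply/eqP.
  apply: (zero_of_irr Hd _ Hirr) => b.
  by rewrite (key Hd) -(key Hd1) Hx !linear0.
have eqk : lker (Phi pi1 T1) = lker (Phi pi T).
  apply/eqP; rewrite eqEdim sub /=.
  have e1 := limg_ker_dim (Phi pi1 T1) fullv.
  have e2 := limg_ker_dim (Phi pi T) fullv.
  rewrite !capfv on on1 in e1 e2.
  lia.
move=> U HU Hinv; apply/eqP; rewrite -subv0; apply/subvP => u Hu.
have : u \in limg (Phi pi1 T1) by rewrite on1 memvf.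
case/memv_imgP => x _ Hux; rewrite Hux in Hu *.
have : x \in lker (Phi pi T).
  rewrite memv_ker; apply/eqP; apply: (zero_of_irr Hd _ Hirr) => b.
  rewrite (key Hd) -(key Hd1); apply/eqP; rewrite -memv_ker.
  apply: (subvP HU); apply: (subvP (Hinv b)); exact: memv_img.
by rewrite -eqk memv_ker memv0.
Qed.
End Core.

Theorem corollary3p4 (F : fieldType) (A : falgType F) (V : vectType F)
  (phi : A -> 'End(V)) (Hphi : linear_system phi) :
  (forall (W : vectType F) (pi : A -> 'End(W)) (S : 'Hom(W, V)) (T : 'Hom(V, W)),
     hom_dilation phi pi S T -> principle_dil pi S T ->
     \dim (fullv : {vspace W}) = (\dim (fullv : {vspace A}) * \dim (fullv : {vspace V}))%N ->
     forall (W1 : vectType F) (pi1 : A -> 'End(W1)) (S1 : 'Hom(W1, V)) (T1 : 'Hom(V, W1)),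
       hom_dilation phi pi1 S1 T1 -> lin_minimal pi1 T1 ->
       irreducible_dil pi1 S1 /\ principle_dil pi1 S1 T1)
  /\
  (forall (W : vectType F) (pi : A -> 'End(W)) (S : 'Hom(W, V)) (T : 'Hom(V, W))
          (W1 : vectType F) (pi1 : A -> 'End(W1)) (S1 : 'Hom(W1, V)) (T1 : 'Hom(V, W1)),
     hom_dilation phi pi S T -> principle_dil pi S T ->
     hom_dilation phi pi1 S1 T1 -> lin_minimal pi1 T1 ->
     (\dim (fullv : {vspace W1}) <= \dim (fullv : {vspace W}))%N ->
     irreducible_dil pi1 S1).
Proof.
split; last exact: core.
move=> W pi S T Hd Hp HdimW W1 pi1 S1 T1 Hd1 Hmin1.
have Hir : irreducible_dil pi1 S1.
  apply: (@core F A V phi W pi S T W1 pi1 S1 T1 Hd Hp Hd1 Hmin1).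
  rewrite HdimW -(@dimX F A V).
  have e1 := limg_ker_dim (@Phi F A V W1 pi1 T1) fullv.
  rewrite capfv (@Phi_onto F A V phi W1 pi1 S1 T1 Hd1 Hmin1) in e1.
  rewrite -[dim (X F A V)]dimvf.
  lia.
by split; [|split].
Qed.
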